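(* Let $G$ and $H$ be finite graphs such that $\Delta(G)<n(H)$ and $\gamma(H)=1$. Then $\Gamma_{\rm S}(G,H)=\gamma_{\rm S}(G,H)=n(G)$.
   Context: All graphs are finite and simple; $\Delta(G)$ is the maximum degree of $G$, $n(X)=|V(X)|$, and $\gamma(X)$ is the domination number. For graphs $G,H$ and a function $f\colon V(G)\to V(H)$, the Sierpiński product $G\otimes_f H$ is the graph with vertex set $V(G)\times V(H)$ and edges of two types: (type 1) $(g,h)(g,h')$ for every $g\in V(G)$ and every edge $hh'\in E(H)$; (type 2) $(g,f(g'))(g',f(g))$ for every edge $gg'\in E(G)$. $\gamma_{\rm S}(G,H)=\min_{f}\gamma(G\otimes_f H)$ and $\Gamma_{\rm S}(G,H)=\max_{f}\gamma(G\otimes_f H)$, over all functions $f\colon V(G)\to V(H)$. *)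

(* Defs.v *)
From mathcomp Require Import all_boot.
Set Implicit Arguments. Unset Strict Implicit. Unset Printing Implicit Defensive.

Record sgraph := SGraph {
  vert : finType;
  adj : rel vert;
  adj_sym : symmetric adj;
  adj_irr : irreflexive adj }.

Definition norder (G : sgraph) : nat := #|vert G|.

(* degree and maximum degree Delta(G) (0 for the empty graph) *)
Definition degree (G : sgraph) (v : vert G) : nat := #|[set w | adj v w]|.
Definition maxdeg (G : sgraph) : nat := \max_(v : vert G) degree v.

Definition dominating (G : sgraph) (D : {set vert G}) : bool :=
  [forall v, (v \in D) || [exists w in D, adj v w]].
Definition domnum (G : sgraph) : nat :=
  \big[minn/#|vert G|]_(D : {set vert G} | dominating D) #|D|.

Definition sprod_adj (G H : sgraph) (f : vert G -> vert H)
    (x y : (vert G * vert H)%type) : bool :=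
  ((x.1 == y.1) && adj x.2 y.2)
  || [&& adj x.1 y.1, x.2 == f y.1 & y.2 == f x.1].

Lemma sprod_adj_sym G H f : symmetric (@sprod_adj G H f).
Proof.
move=> [g h] [g' h']; rewrite /sprod_adj /=.
rewrite eq_sym (adj_sym h') (adj_sym g').
by case: (g' == g); case: (adj g g'); case: (h == f g'); case: (h' == f g).
Qed.

Lemma sprod_adj_irr G H f : irreflexive (@sprod_adj G H f).
Proof. by move=> [g h]; rewrite /sprod_adj /= !adj_irr andbF. Qed.

Definition sprod (G H : sgraph) (f : vert G -> vert H) : sgraph :=
  @SGraph (vert G * vert H)%type (sprod_adj f) (@sprod_adj_sym G H f)
          (@sprod_adj_irr G H f).

Definition gammaS (G H : sgraph) : nat :=
  \big[minn/(#|vert G| * #|vert H|)]_(f : {ffun vert G -> vert H})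
     domnum (sprod (fun g => f g)).
Definition GammaS (G H : sgraph) : nat :=
  \max_(f : {ffun vert G -> vert H}) domnum (sprod (fun g => f g)).

(* Main.v *)
Require Import Defs.
From mathcomp Require Import all_boot.

Lemma dom_univ (H : sgraph) : domnum H = 1 ->
  exists h0 : vert H, forall h, (h == h0) || adj h h0.
Proof.
rewrite /domnum.
have : (fun x => x = #|vert H| \/ exists D : {set vert H}, dominating D /\ #|D| = x)
   (\big[minn/#|vert H|]_(D : {set vert H} | dominating D) #|D|).
  apply: (big_ind (fun x => x = #|vert H| \/ exists D : {set vert H}, dominating D /\ #|D| = x)).
  - by left.
  - move=> x y Hx Hy /=; case: (leqP x y) => xy.
      by [].
    by [].
  - by move=> D dD; right; exists D.
move=> /= [->|[D [dD <-]]] E.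
  have /card1P [h0 Hh0] : #|vert H| == 1 by rewrite E.
  by exists h0 => h; have := Hh0 h; rewrite !inE => <-.
have /card1P [h0 Hh0] : #|D| == 1 by rewrite E.
have eD : D = [set h0] by apply/setP => x; rewrite Hh0 inE.
exists h0 => h; move/forallP: dD => /(_ h); rewrite eD inE.
case/orP=> [->//|/existsP [w /andP [] ]]; rewrite inE => /eqP -> ->.
by rewrite orbT.
Qed.

Lemma dom_lower (G H : sgraph) (f : vert G -> vert H) :
  maxdeg G < norder H ->
  forall D : {set vert (sprod f)}, dominating D -> #|vert G| <= #|D|.
Proof.
move=> hdeg D dD.
have cov : forall g : vert G, exists h, (g, h) \in D.
  move=> g; suff: [exists h, (g, h) \in D] by move/existsP.
  apply: contraT => nD; exfalso.
  have sub : [set: vert H] \subset f @: [set w | adj g w].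
    apply/subsetP => h _.
    move/forallP: dD => /(_ (g, h)) /orP [inD|/existsP [w /andP [wD]]].
      by case/negP: nD; apply/existsP; exists h.
    rewrite /= /sprod_adj /=; case/orP=> [/andP [/eqP e _]|/and3P [a /eqP hf _]].
      by case/negP: nD; apply/existsP; exists w.2; rewrite e -surjective_pairing.
    by rewrite hf; apply: imset_f; rewrite inE.
  have := subset_leq_card sub; rewrite cardsT.
  have := leq_imset_card f [set w | adj g w].
  have : degree g <= maxdeg G by apply: leq_bigmax.
  rewrite /degree /norder in hdeg *; move=> a b c.
  have := leq_trans c (leq_trans b a); rewrite leqNgt.
  by rewrite (leq_trans _ hdeg).
have sub : [set: vert G] \subset [set x.1 | x in D].
  apply/subsetP => g _; have [h gh] := cov g.
  by apply/imsetP; exists (g, h).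
have := subset_leq_card sub; rewrite cardsT => a.
exact: leq_trans a (leq_imset_card _ _).
Qed.

Lemma bigmin_le (I : finType) (P : pred I) (F : I -> nat) b i0 :
  P i0 -> \big[minn/b]_(i | P i) F i <= F i0.
Proof.
move=> Pi0; move: (mem_index_enum i0).
elim: (index_enum I) => // x s IH; rewrite big_cons inE.
case/orP=> [/eqP <-|/IH h]; first by rewrite Pi0 geq_minl.
by case: (P x) => //; rewrite geq_min h orbT.
Qed.

Lemma dom_eq (G H : sgraph) (f : vert G -> vert H) (h0 : vert H) :
  maxdeg G < norder H -> (forall h, (h == h0) || adj h h0) ->
  domnum (sprod f) = #|vert G|.
Proof.
move=> hdeg hu; apply/eqP; rewrite eqn_leq; apply/andP; split.
  pose D0 : {set vert (sprod f)} := [set (g, h0) | g : vert G].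
  have dD0 : dominating D0.
    apply/forallP => [[g h]]; case/orP: (hu h) => [/eqP ->|a].
      by rewrite imset_f.
    apply/orP; right; apply/existsP; exists (g, h0).
    by rewrite imset_f //= /sprod_adj /= eqxx a.
  have cD0 : #|D0| = #|vert G|.
    rewrite card_imset //; last by move=> x y [].
  rewrite /domnum -cD0; exact: bigmin_le.
rewrite /domnum; apply: (big_ind (fun x => #|vert G| <= x)).
- rewrite /= card_prod; apply: leq_pmulr.
  by apply/card_gt0P; exists h0.
- by move=> x y a b; rewrite leq_min a b.
- by move=> D dD; apply: dom_lower.
Qed.

Theorem proposition2p3 (G H : sgraph) :
  maxdeg G < norder H -> domnum H = 1 ->
  GammaS G H = norder G /\ gammaS G H = norder G.
Proof.
move=> hdeg /dom_univ [h0 hu].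
have E : forall f : {ffun vert G -> vert H}, domnum (sprod (fun g => f g)) = #|vert G|.
  by move=> f; apply: (@dom_eq G H (fun g => f g) h0 hdeg hu).
split.
  rewrite /GammaS (eq_bigr (fun _ => #|vert G|)) //.
  apply/eqP; rewrite eqn_leq; apply/andP; split.
    by apply/bigmax_leqP.
  exact: (leq_bigmax [ffun=> h0]).
rewrite /gammaS (eq_bigr (fun _ => #|vert G|)) //.
apply/eqP; rewrite eqn_leq; apply/andP; split.
  exact: (@bigmin_le _ _ (fun _ => #|vert G|) _ [ffun=> h0]).
apply: (big_ind (fun x => #|vert G| <= x)) => //.
- apply: leq_pmulr; by apply/card_gt0P; exists h0.
- by move=> x y a b; rewrite leq_min a b.
Qed.
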